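(* Assume $\delta=d$ and $\gamma\ge1$. Then on $A_p\times\mathbb{C}$ the limit $$G_f^\alpha(z,w)=\lim_{n\to\infty}\frac{1}{d^n}\log^+\max\{|p^n(z)|^{\max\{\alpha,0\}},|Q_z^n(w)|\}$$ exists in $[0,+\infty]$ and $$G_f^\alpha(z,w)=\begin{cases}+\infty & (z,w)\in A_f,\\ \max\{\alpha,0\}\,G_p(z) & (z,w)\in B_f.\end{cases}$$
   Context: Let $p(z)=z^d+O(z^{d-1})$ be a monic polynomial of degree $\delta=d\ge 2$, and let $q(z,w)=b(z)w^d+(\text{terms of lower degree in } w)$ be a polynomial with $\deg_w q=d$, where $b$ is a monic polynomial of degree $\gamma$. Let $f(z,w)=(p(z),q(z,w))$. Write $Q_z^n=q_{p^{n-1}(z)}\circ\cdots\circ q_{p(z)}\circ q_z$ with $q_z=q(z,\cdot)$, so $f^n(z,w)=(p^n(z),Q_z^n(w))$. Let $A_p=\{z: p^n(z)\to\infty\}$ and $G_p(z)=\lim_n d^{-n}\log^+|p^n(z)|$. Define $\alpha=\max\{(n_j-\gamma)/(d-m_j)\}$ over monomials $z^{n_j}w^{m_j}$ appearing in $q$ with nonzero coefficient and $m_j<d$, and $\alpha=-\infty$ if $q=b(z)w^d$ (then $\max\{\alpha,0\}=0$). Let $W_R=\{(z,w):|z|>R,\ |w|>R|z|^\alpha\}$ (if $\alpha=-\infty$: $\{|z|>R,\ w\ne0\}$), fix $R>1$ large enough that $f(W_R)\subset W_R$ and $W_R\subset A_p\times\mathbb{C}$, and set $A_f=\bigcup_{n\ge0}f^{-n}(W_R)$,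 $B_f=(A_p\times\mathbb{C})\setminus A_f$. *)

(* Defs.v *)
From Stdlib Require Import Reals Lra List.
Import ListNotations.
Open Scope R_scope.

Definition Cx := (R * R)%type.
Definition C0 : Cx := (0, 0).
Definition C1 : Cx := (1, 0).
Definition Cadd (a b : Cx) : Cx := (fst a + fst b, snd a + snd b).
Definition Cmul (a b : Cx) : Cx :=
  (fst a * fst b - snd a * snd b, fst a * snd b + snd a * fst b).
Definition Cmod (a : Cx) : R := sqrt (fst a * fst a + snd a * snd a).

(* ---------- univariate polynomials: coefficient lists, constant term first ---------- *)
Definition cpoly := list Cx.
Fixpoint ceval (p : cpoly) (z : Cx) : Cx :=
  match p with
  | [] => C0
  | c :: p' => Cadd c (Cmul z (ceval p' z))
  end.
Definition monic_deg (p : cpoly) (n : nat) : Prop :=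
  length p = S n /\ nth n p C0 = C1.

(* ---------- bivariate polynomials q(z,w) = sum_j (q_j(z)) w^j ---------- *)
Definition bpoly := list cpoly.
Fixpoint beval (q : bpoly) (z w : Cx) : Cx :=
  match q with
  | [] => C0
  | c :: q' => Cadd (ceval c z) (Cmul w (beval q' z w))
  end.

Definition fmap (p : cpoly) (q : bpoly) (x : Cx * Cx) : Cx * Cx :=
  (ceval p (fst x), beval q (fst x) (snd x)).
Definition fiter (p : cpoly) (q : bpoly) (n : nat) (x : Cx * Cx) : Cx * Cx :=
  Nat.iter n (fmap p q) x.
Definition piter (p : cpoly) (n : nat) (z : Cx) : Cx := Nat.iter n (ceval p) z.
Definition Qiter (p : cpoly) (q : bpoly) (n : nat) (z w : Cx) : Cx :=
  snd (fiter p q n (z, w)).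

Definition Cnz (c : Cx) : bool :=
  if Req_EM_T (fst c) 0 then (if Req_EM_T (snd c) 0 then false else true) else true.

Definition omax (a b : option R) : option R :=
  match a, b with
  | None, _ => b
  | _, None => a
  | Some x, Some y => Some (Rmax x y)
  end.

Definition alpha_vals (q : bpoly) (d gamma : nat) : list R :=
  flat_map (fun m =>
    flat_map (fun n =>
      if Cnz (nth n (nth m q []) C0)
      then [(INR n - INR gamma) / (INR d - INR m)] else [])
      (seq 0 (length (nth m q []))))
    (seq 0 d).

(* alpha, with None standing for -infinity (case q = b(z) w^d) *)
Definition alpha (q : bpoly) (d gamma : nat) : option R :=
  fold_right (fun x acc => omax (Some x) acc) None (alpha_vals q d gamma).

Definition alpha_plus (q : bpoly) (d gamma : nat) : R :=
  match alpha q d gamma with None => 0 | Some a => Rmax a 0 end.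

Definition in_Ap (p : cpoly) (z : Cx) : Prop :=
  forall M : R, exists N : nat, forall n, (N <= n)%nat -> M < Cmod (piter p n z).

Definition in_WR (q : bpoly) (d gamma : nat) (R0 : R) (x : Cx * Cx) : Prop :=
  match alpha q d gamma with
  | Some a => R0 < Cmod (fst x) /\ R0 * Rpower (Cmod (fst x)) a < Cmod (snd x)
  | None => R0 < Cmod (fst x) /\ snd x <> C0
  end.

Definition in_Af (p : cpoly) (q : bpoly) (d gamma : nat) (R0 : R) (x : Cx * Cx) : Prop :=
  exists n : nat, in_WR q d gamma R0 (fiter p q n x).

(* ---------- log^+ and a power x^a with 0^a = 0 (a>0), x^0 = 1 ---------- *)
Definition logp (x : R) : R := if Rlt_dec 1 x then ln x else 0.
Definition rpow (x a : R) : R :=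
  if Rlt_dec 0 x then Rpower x a else if Req_EM_T a 0 then 1 else 0.

Definition Gp_seq (p : cpoly) (d : nat) (z : Cx) (n : nat) : R :=
  logp (Cmod (piter p n z)) / (INR d ^ n).

Definition Gf_seq (p : cpoly) (q : bpoly) (d gamma : nat) (z w : Cx) (n : nat) : R :=
  logp (Rmax (rpow (Cmod (piter p n z)) (alpha_plus q d gamma))
             (Cmod (Qiter p q n z w))) / (INR d ^ n).

(* Main.v *)
Require Import Defs.
From Stdlib Require Import Reals Lra List Lia.
Import ListNotations.
Open Scope R_scope.
From Coquelicot Require Coquelicot.

Module CX.
Import Coquelicot.Coquelicot.
Lemma cmod_eq (a : Cx) : Defs.Cmod a = Coquelicot.Complex.Cmod a.
Proof. unfold Defs.Cmod, Coquelicot.Complex.Cmod. f_equal. simpl. ring. Qed.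
Lemma cmod_add (a b : Cx) : Defs.Cmod (Cadd a b) <= Defs.Cmod a + Defs.Cmod b.
Proof. rewrite !cmod_eq. apply Cmod_triangle. Qed.
Lemma cmod_mul (a b : Cx) : Defs.Cmod (Cmul a b) = Defs.Cmod a * Defs.Cmod b.
Proof. rewrite !cmod_eq. apply Cmod_mult. Qed.
Lemma cmod_ge0 (a : Cx) : 0 <= Defs.Cmod a.
Proof. rewrite cmod_eq. apply Cmod_ge_0. Qed.
End CX.
Import CX.

Lemma cmod_C0 : Cmod Defs.C0 = 0.
Proof. unfold Cmod, C0; simpl. replace (0*0+0*0) with 0 by ring. apply sqrt_0. Qed.
Lemma cmod_C1 : Cmod Defs.C1 = 1.
Proof. unfold Cmod, C1; simpl. replace (1*1+0*0) with 1 by ring. apply sqrt_1. Qed.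
Lemma cmod_add_lb (a b : Cx) : Cmod b - Cmod a <= Cmod (Cadd a b).
Proof.
  assert (H := cmod_add (Cadd a b) (Cmul (-1,0) a)).
  replace (Cadd (Cadd a b) (Cmul (-1, 0) a)) with b in H.
  2:{ unfold Cadd, Cmul; destruct a, b; simpl; f_equal; ring. }
  rewrite cmod_mul in H.
  replace (Cmod (-1,0)) with 1 in H. lra.
  unfold Cmod; simpl. replace (-1 * -1 + 0 * 0) with 1 by ring. now rewrite sqrt_1.
Qed.
Lemma cmod_eq0 (a : Cx) : Cmod a = 0 -> a = Defs.C0.
Proof.
  unfold Cmod; destruct a as [a1 a2]; simpl; intro H.
  apply sqrt_eq_0 in H; [| nra]. unfold C0. f_equal; nra.
Qed.

Fixpoint hl (l : list R) (t : R) : R :=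
  match l with
  | [] => 0
  | a :: l' => match l' with [] => 0 | _ => a + t * hl l' t end
  end.
Fixpoint hn (l : list R) (t : R) : R :=
  match l with [] => 0 | a :: l' => a + t * hn l' t end.
Definition sumR (l : list R) : R := fold_right Rplus 0 l.

Lemma cadd_cmul0 (c w : Cx) : Cadd c (Cmul w Defs.C0) = c.
Proof. destruct c, w; unfold Cadd, Cmul, Defs.C0; simpl; f_equal; ring. Qed.

Lemma ceval_lb : forall k (l : cpoly) (w L : Cx), length l = S k -> nth k l Defs.C0 = L ->
  Cmod L * (Cmod w) ^ k - hl (map Cmod l) (Cmod w) <= Cmod (ceval l w).
Proof.
  induction k as [|k IH]; intros l w L Hl HL.
  - destruct l as [|c [|c' l']]; simpl in Hl; try discriminate.
    simpl in HL; subst. simpl. rewrite cadd_cmul0. lra.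
  - destruct l as [|c l']; simpl in Hl; try discriminate.
    injection Hl as Hl. simpl in HL.
    destruct l' as [|c' l'']; simpl in Hl; try discriminate.
    specialize (IH (c' :: l'') w L ltac:(simpl; lia) HL).
    change (Cmod L * Cmod w ^ S k - (Cmod c + Cmod w * hl (map Cmod (c' :: l'')) (Cmod w))
       <= Cmod (Cadd c (Cmul w (ceval (c' :: l'') w)))).
    pose proof (cmod_add_lb c (Cmul w (ceval (c' :: l'') w))).
    rewrite cmod_mul in H. pose proof (cmod_ge0 w).
    simpl pow. assert (Cmod w * (Cmod L * Cmod w ^ k - hl (map Cmod (c' :: l'')) (Cmod w))
       <= Cmod w * Cmod (ceval (c' :: l'') w)) by (apply Rmult_le_compat_l; lra).
    nra.
Qed.

Lemma ceval_ub : forall (l : cpoly) (w : Cx), Cmod (ceval l w) <= hn (map Cmod l) (Cmod w).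
Proof.
  induction l as [|c l IH]; intro w; simpl.
  - rewrite cmod_C0. lra.
  - eapply Rle_trans. apply cmod_add. rewrite cmod_mul.
    pose proof (cmod_ge0 w). specialize (IH w).
    assert (Cmod w * Cmod (ceval l w) <= Cmod w * hn (map Cmod l) (Cmod w)) by
      (apply Rmult_le_compat_l; lra). lra.
Qed.

Lemma sumR_ge0 (l : list R) : (forall a, In a l -> 0 <= a) -> 0 <= sumR l.
Proof. induction l; simpl; intros H. 1: lra. pose proof (H a (or_introl eq_refl)).
  assert (0 <= sumR l) by (apply IHl; auto). lra. Qed.

Lemma hn_le_sum : forall (l : list R) t, 1 <= t -> (forall a, In a l -> 0 <= a) ->
  hn l t <= sumR l * t ^ (length l - 1).
Proof.
  induction l as [|a l IH]; intros t Ht Hpos. 1: simpl; lra.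
  assert (Ha : 0 <= a) by (apply Hpos; simpl; auto).
  assert (Hl : forall b, In b l -> 0 <= b) by (intros; apply Hpos; simpl; auto).
  specialize (IH t Ht Hl). pose proof (sumR_ge0 l Hl).
  destruct l as [|b l'].
  - simpl. simpl in *. lra.
  - simpl length in *. replace (S (S (length l')) - 1)%nat with (S (length l')) by lia.
    replace (S (length l') - 1)%nat with (length l') in IH by lia.
    simpl pow. assert (1 <= t ^ length l') by (apply pow_R1_Rle; lra).
    assert (t * hn (b :: l') t <= t * (sumR (b :: l') * t ^ length l')) by
      (apply Rmult_le_compat_l; lra).
    change (sumR (a :: b :: l')) with (a + sumR (b :: l')).
    change (hn (a :: b :: l') t) with (a + t * hn (b :: l') t).
    assert (1 <= t * t ^ length l') by nra. nra.
Qed.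

Lemma hl_le_sum : forall (l : list R) t, 1 <= t -> (forall a, In a l -> 0 <= a) ->
  hl l t <= sumR l * t ^ (length l - 2).
Proof.
  induction l as [|a l IH]; intros t Ht Hpos. 1: simpl; lra.
  assert (Ha : 0 <= a) by (apply Hpos; simpl; auto).
  assert (Hl : forall b, In b l -> 0 <= b) by (intros; apply Hpos; simpl; auto).
  specialize (IH t Ht Hl). pose proof (sumR_ge0 l Hl).
  destruct l as [|b l'].
  - simpl. lra.
  - simpl length in *.
    destruct l' as [|c l''].
    + simpl in *. lra.
    + simpl length in *.
      replace (S (S (S (length l''))) - 2)%nat with (S (length l'')) by lia.
      replace (S (S (length l'')) - 2)%nat with (length l'') in IH by lia.
      simpl pow. assert (1 <= t ^ length l'') by (apply pow_R1_Rle; lra).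
      assert (t * hl (b :: c :: l'') t <= t * (sumR (b :: c :: l'') * t ^ length l'')) by
        (apply Rmult_le_compat_l; lra).
      change (sumR (a :: b :: c :: l'')) with (a + sumR (b :: c :: l'')).
      change (hl (a :: b :: c :: l'') t) with (a + t * hl (b :: c :: l'') t).
      assert (1 <= t * t ^ length l'') by nra. nra.
Qed.

Lemma in_map_cmod (l : cpoly) a : In a (map Cmod l) -> 0 <= a.
Proof. intro H. apply in_map_iff in H. destruct H as [c [<- _]]. apply cmod_ge0. Qed.

Lemma ln_le' (a b : R) : 0 < a -> a <= b -> ln a <= ln b.
Proof. intros Ha Hab. destruct (Rle_lt_or_eq_dec _ _ Hab) as [H|H].
  - left. apply ln_increasing; auto. - subst; lra. Qed.

Lemma In_le_sumR (l : list R) a : (forall b, In b l -> 0 <= b) -> In a l -> a <= sumR l.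
Proof.
  induction l as [|b l IH]; simpl; intros Hp Hin. 1: contradiction.
  assert (Hl : forall c, In c l -> 0 <= c) by (intros; apply Hp; simpl; auto).
  pose proof (sumR_ge0 l Hl). destruct Hin as [<-|Hin]. lra.
  assert (0 <= b) by (apply Hp; simpl; auto). specialize (IH Hl Hin). lra.
Qed.

Lemma monic_bounds (c : cpoly) (k : nat) : monic_deg c k -> (1 <= k)%nat ->
  exists K, 1 <= K /\ 1 <= sumR (map Cmod c) /\ forall u, K <= Cmod u ->
    (3/4) * Cmod u ^ k <= Cmod (ceval c u) <= sumR (map Cmod c) * Cmod u ^ k.
Proof.
  intros [Hlen Hlead] Hk. set (Sm := sumR (map Cmod c)).
  assert (HS : 1 <= Sm).
  { unfold Sm. rewrite <- cmod_C1. apply In_le_sumR. apply in_map_cmod.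
    rewrite <- Hlead. apply in_map. apply nth_In. lia. }
  exists (4 * Sm + 1). split; [lra|]. split; [auto|]. intros u Hu.
  set (x := Cmod u) in *.
  assert (Hx1 : 1 <= x) by lra.
  split.
  - pose proof (ceval_lb k c u Defs.C1 Hlen Hlead) as H.
    rewrite cmod_C1 in H. fold x in H.
    pose proof (hl_le_sum (map Cmod c) x Hx1 (in_map_cmod c)) as H2.
    rewrite length_map, Hlen in H2. fold Sm in H2.
    replace (S k - 2)%nat with (k - 1)%nat in H2 by lia.
    replace k with (S (k - 1)) in H |- * by lia. simpl pow in *.
    assert (1 <= x ^ (k - 1)) by (apply pow_R1_Rle; lra).
    assert (Sm * x ^ (k-1) <= x * x ^ (k-1) / 4).
    { assert (Sm * x ^ (k-1) * 4 <= x * x ^ (k-1)) by nra. lra. }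
    lra.
  - eapply Rle_trans. apply ceval_ub. fold x.
    pose proof (hn_le_sum (map Cmod c) x Hx1 (in_map_cmod c)) as H2.
    rewrite length_map, Hlen in H2. replace (S k - 1)%nat with k in H2 by lia. exact H2.
Qed.

Module GR.
Import Coquelicot.Coquelicot.

Lemma geo0 (d c : R) : 1 < d -> is_lim_seq (fun n => c / d ^ n) 0.
Proof.
  intro Hd.
  apply is_lim_seq_ext with (fun n => c * (/ d) ^ n).
  { intro n. rewrite pow_inv. unfold Rdiv. reflexivity. }
  replace (Finite 0) with (Rbar_mult c 0) by (simpl; f_equal; ring).
  apply is_lim_seq_scal_l. apply is_lim_seq_geom.
  rewrite Rabs_pos_eq. assert (Hi : / d < / 1) by (apply Rinv_1_lt_contravar; lra). rewrite Rinv_1 in Hi. exact Hi. left; apply Rinv_0_lt_compat; lra.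
Qed.

Lemma green (a : nat -> R) (d M : R) (N : nat) : 1 < d -> 0 <= M ->
  (forall n, (N <= n)%nat -> Rabs (a (S n) - d * a n) <= M) ->
  (exists g, Un_cv (fun n => a n / d ^ n) g) /\
  (forall n, (N <= n)%nat -> (a N - M / (d - 1)) / d ^ N <= a n / d ^ n).
Proof.
  intros Hd HM H. set (c := M / (d - 1)).
  assert (Hc : M = c * (d - 1)) by (unfold c; field; lra).
  assert (Hpow : forall n, 0 < d ^ n) by (intro; apply pow_lt; lra).
  assert (Hu : forall n, (N <= n)%nat -> (a (S n) + c) / d ^ (S n) <= (a n + c) / d ^ n).
  { intros n Hn. specialize (H n Hn). apply Rabs_le_between in H.
    assert (a (S n) + c <= d * (a n + c)) by nra. specialize (Hpow n).
    replace ((a (S n) + c) / d ^ S n) with ((a (S n) + c) / d / d ^ n)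
      by (simpl; field; split; lra).
    unfold Rdiv at 1 3. apply Rmult_le_compat_r. left; apply Rinv_0_lt_compat; auto.
    apply Rmult_le_reg_r with d; try lra. unfold Rdiv. rewrite Rmult_assoc, Rinv_l; lra. }
  assert (Hv : forall n, (N <= n)%nat -> (a n - c) / d ^ n <= (a (S n) - c) / d ^ (S n)).
  { intros n Hn. specialize (H n Hn). apply Rabs_le_between in H.
    assert (d * (a n - c) <= a (S n) - c) by nra. specialize (Hpow n).
    replace ((a (S n) - c) / d ^ S n) with ((a (S n) - c) / d / d ^ n)
      by (simpl; field; split; lra).
    unfold Rdiv at 1 2. apply Rmult_le_compat_r. left; apply Rinv_0_lt_compat; auto.
    apply Rmult_le_reg_r with d; try lra. unfold Rdiv. rewrite Rmult_assoc, Rinv_l; lra. }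
  assert (Hv2 : forall k, (a N - c) / d ^ N <= (a (k + N)%nat - c) / d ^ (k + N)).
  { induction k. simpl; lra. eapply Rle_trans. apply IHk.
    replace (S k + N)%nat with (S (k + N)) by lia. apply Hv. lia. }
  assert (Huv : forall n, (a n - c) / d ^ n <= (a n + c) / d ^ n).
  { intro n. unfold Rdiv. apply Rmult_le_compat_r. left; apply Rinv_0_lt_compat; auto.
    assert (0 <= c) by (unfold c; apply Rdiv_le_0_compat; lra). lra. }
  split.
  - destruct (ex_finite_lim_seq_decr (fun k => (a (k + N)%nat + c) / d ^ (k + N))
       ((a N - c) / d ^ N)) as [l Hl].
    { intro k. replace (S k + N)%nat with (S (k + N)) by lia. apply Hu. lia. }
    { intro k. eapply Rle_trans. apply Hv2. apply Huv. }
    exists l. apply is_lim_seq_Reals.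
    apply (is_lim_seq_incr_n _ N).
    assert (H0 := geo0 d c Hd). apply (is_lim_seq_incr_n _ N) in H0.
    replace l with (l - 0) by ring.
    apply is_lim_seq_ext with (fun k => (a (k + N)%nat + c) / d ^ (k + N) - c / d ^ (k + N)).
    { intro k. field. apply Rgt_not_eq, Hpow. }
    apply is_lim_seq_minus'; auto.
  - intros n Hn. replace n with (n - N + N)%nat by lia.
    eapply Rle_trans. apply (Hv2 (n - N)%nat).
    unfold Rdiv. apply Rmult_le_compat_r. left; apply Rinv_0_lt_compat; auto.
    assert (0 <= c) by (unfold c; apply Rdiv_le_0_compat; lra). lra.
Qed.
End GR.
Import GR.

Lemma beval_ceval (q : bpoly) z w : beval q z w = ceval (map (fun c => ceval c z) q) w.
Proof. induction q; simpl; auto. rewrite IHq. reflexivity. Qed.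

Lemma nth_map_def {A} (g : A -> R) (l : list A) (dA : A) m : (m < length l)%nat ->
  nth m (map g l) 0 = g (nth m l dA).
Proof. intro H. rewrite (nth_indep _ 0 (g dA)). apply map_nth. rewrite length_map; auto. Qed.

Lemma fold_omax_ge : forall (l : list R) v, In v l -> exists a,
  fold_right (fun x acc => omax (Some x) acc) None l = Some a /\ v <= a.
Proof.
  induction l as [|x l IH]; intros v Hin. contradiction.
  change (fold_right (fun x acc => omax (Some x) acc) None (x :: l)) with
    (omax (Some x) (fold_right (fun x acc => omax (Some x) acc) None l)).
  destruct Hin as [<-|Hin].
  - destruct (fold_right (fun x acc => omax (Some x) acc) None l) as [b|]; simpl.
    + exists (Rmax x b); split; auto. apply Rmax_l.
    + exists x; split; auto; lra.
  - destruct (IH v Hin) as [b [Hb Hvb]]. rewrite Hb. simpl.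
    exists (Rmax x b); split; auto. eapply Rle_trans. apply Hvb. apply Rmax_r.
Qed.

Lemma alpha_mem (q : bpoly) d gamma m i : (m < d)%nat -> (i < length (nth m q []))%nat ->
  Cnz (nth i (nth m q []) Defs.C0) = true ->
  In ((INR i - INR gamma) / (INR d - INR m)) (alpha_vals q d gamma).
Proof.
  intros Hm Hi Hc. unfold alpha_vals. apply in_flat_map. exists m. split.
  apply in_seq; lia. apply in_flat_map. exists i. split. apply in_seq; lia.
  rewrite Hc. left; reflexivity.
Qed.

Lemma cnz_true (c : Cx) : Cmod c <> 0 -> Cnz c = true.
Proof.
  intro H. unfold Cnz. destruct (Req_EM_T (fst c) 0); auto.
  destruct (Req_EM_T (snd c) 0); auto. exfalso. apply H.
  destruct c; simpl in *; subst. unfold Cmod; simpl.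
  replace (0*0+0*0) with 0 by ring. apply sqrt_0.
Qed.

Lemma Rpower_pos x a : 0 < Rpower x a.
Proof. unfold Rpower. apply exp_pos. Qed.

Lemma kreal (x y Rr a : R) (i gamma m d : nat) : 1 < x -> 1 <= Rr ->
  Rr * Rpower x a < y -> (m < d)%nat ->
  (INR i - INR gamma) / (INR d - INR m) <= a ->
  Rr * x ^ i * y ^ m <= x ^ gamma * y ^ d.
Proof.
  intros Hx HR Hy Hmd Ha.
  set (k := (d - m)%nat).
  assert (Hk : INR d - INR m = INR k) by (unfold k; rewrite minus_INR; [ring|lia]).
  assert (Hk1 : (1 <= k)%nat) by (unfold k; lia).
  assert (HkR : 0 < INR k) by (apply lt_0_INR; lia).
  rewrite Hk in Ha.
  assert (Hia : INR i - INR gamma <= a * INR k).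
  { apply Rmult_le_reg_r with (/ INR k). apply Rinv_0_lt_compat; auto.
    rewrite Rmult_assoc, Rinv_r; lra. }
  set (P := Rpower x a). assert (HP : 0 < P) by apply Rpower_pos.
  assert (Hxi : x ^ i <= P ^ k * x ^ gamma).
  { rewrite <- (Rpower_pow i x), <- (Rpower_pow gamma x), <- (Rpower_pow k P) by lra.
    unfold P. rewrite Rpower_mult.
    replace (INR i) with ((INR i - INR gamma) + INR gamma) at 1 by ring.
    rewrite Rpower_plus. apply Rmult_le_compat_r. left; apply Rpower_pos.
    apply Rle_Rpower; lra. }
  assert (HRP : Rr * P ^ k <= y ^ k).
  { replace k with (S (k - 1)) by lia. simpl pow.
    assert (Rr * P <= y) by (unfold P in *; lra).
    assert (P ^ (k-1) <= y ^ (k-1)) by (apply pow_incr; split; [lra|nra]).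
    assert (0 <= P ^ (k-1)) by (apply pow_le; lra).
    assert (0 <= Rr * P) by nra.
    assert (Rr * P * P ^ (k-1) <= y * y ^ (k-1)) by (apply Rmult_le_compat; lra).
    lra. }
  assert (Hd : y ^ d = y ^ k * y ^ m) by (rewrite <- pow_add; f_equal; unfold k; lia).
  assert (0 < Rr * P) by (apply Rmult_lt_0_compat; lra).
  rewrite Hd. assert (0 <= y ^ m) by (apply pow_le; unfold P in *; lra).
  assert (0 <= x ^ gamma) by (apply pow_le; lra).
  assert (0 <= P ^ k) by (apply pow_le; lra).
  assert (Rr * x ^ i <= Rr * (P ^ k * x ^ gamma)) by (apply Rmult_le_compat_l; lra).
  assert (Rr * x ^ i * y ^ m <= Rr * (P ^ k * x ^ gamma) * y ^ m) by
    (apply Rmult_le_compat_r; lra).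
  assert (Rr * P ^ k * x^gamma * y^m <= y ^ k * x^gamma * y^m) by
    (apply Rmult_le_compat_r; [lra|]; apply Rmult_le_compat_r; lra).
  nra.
Qed.

Lemma hl_bound_gen : forall (l : list R) j t E, 0 <= t -> 0 <= E ->
  (forall m, (S m < length l)%nat -> t ^ (m + j) * nth m l 0 <= E) ->
  t ^ j * hl l t <= INR (length l) * E.
Proof.
  induction l as [|a l IH]; intros j t E Ht HE H. simpl; lra.
  destruct l as [|b l'].
  - simpl. lra.
  - change (hl (a :: b :: l') t) with (a + t * hl (b :: l') t).
    assert (H0 := H 0%nat ltac:(simpl; lia)). simpl in H0.
    assert (IH' := IH (S j) t E Ht HE).
    assert (Hh : t ^ S j * hl (b :: l') t <= INR (length (b :: l')) * E).
    { apply IH'. intros m Hm. replace (m + S j)%nat with (S m + j)%nat by lia.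
      apply (H (S m)). simpl in *; lia. }
    simpl pow in Hh. change (length (a :: b :: l')) with (S (length (b :: l'))).
    rewrite S_INR. nra.
Qed.

Lemma hn_bound_gen : forall (l : list R) j t Y E, 0 <= t -> 0 <= Y ->
  (forall i, (i < length l)%nat -> t ^ (i + j) * nth i l 0 * Y <= nth i l 0 * E) ->
  t ^ j * hn l t * Y <= sumR l * E.
Proof.
  induction l as [|a l IH]; intros j t Y E Ht HY H. simpl; lra.
  change (hn (a :: l) t) with (a + t * hn l t). change (sumR (a :: l)) with (a + sumR l).
  assert (H0 := H 0%nat ltac:(simpl; lia)). simpl in H0.
  assert (Hh : t ^ S j * hn l t * Y <= sumR l * E).
  { apply IH; auto. intros i Hi. replace (i + S j)%nat with (S i + j)%nat by lia.
    apply (H (S i)). simpl; lia. }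
  simpl pow in Hh. nra.
Qed.

Lemma q_lb (d gamma : nat) (q : bpoly) : (1 <= gamma)%nat -> length q = S d ->
  monic_deg (nth d q nil) gamma ->
  exists Rmin, 1 <= Rmin /\ forall R0 z w, Rmin <= R0 -> in_WR q d gamma R0 (z, w) ->
   0 < Cmod w /\ 1 < Cmod z /\ R0 < Cmod z /\
   (1/2) * Cmod z ^ gamma * Cmod w ^ d <= Cmod (beval q z w).
Proof.
  intros Hg Hq Hb.
  destruct (monic_bounds _ _ Hb Hg) as [Kb [HKb [HSb Hbb]]].
  set (Sall := sumR (map (fun c => sumR (map Cmod c)) q)).
  assert (HSall : 0 <= Sall).
  { apply sumR_ge0. intros a Ha. apply in_map_iff in Ha. destruct Ha as [c [<- _]].
    apply sumR_ge0, in_map_cmod. }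
  exists (Rmax Kb (4 * INR (S d) * Sall + 1)). split.
  { eapply Rle_trans. apply HKb. apply Rmax_l. }
  intros R0 z w HR0 HW.
  assert (HKR : Kb <= R0) by (eapply Rle_trans; [apply Rmax_l|apply HR0]).
  assert (HSR : 4 * INR (S d) * Sall + 1 <= R0) by (eapply Rle_trans; [apply Rmax_r|apply HR0]).
  set (x := Cmod z). set (y := Cmod w).
  assert (Hx : R0 < x).
  { unfold in_WR in HW. destruct (alpha q d gamma); simpl in HW; tauto. }
  assert (Hy : 0 < y).
  { unfold in_WR in HW. destruct (alpha q d gamma) as [a|]; simpl in HW.
    - destruct HW as [_ HW]. fold x y in HW. assert (0 < R0 * Rpower x a).
      { apply Rmult_lt_0_compat. lra. apply Rpower_pos. } lra.
    - destruct HW as [_ HW]. destruct (cmod_ge0 w) as [H|H]. exact H.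
      exfalso. apply HW. apply cmod_eq0. auto. }
  split; [auto|]. split; [lra|]. split; [auto|].
  assert (Hbz := Hbb z ltac:(fold x; lra)). fold x in Hbz.
  assert (Hnth : nth d (map (fun c => ceval c z) q) Defs.C0 = ceval (nth d q nil) z).
  { change Defs.C0 with ((fun c => ceval c z) nil). apply map_nth. }
  assert (Hlb := ceval_lb d (map (fun c => ceval c z) q) w (ceval (nth d q nil) z)
    ltac:(rewrite length_map; auto) Hnth).
  rewrite <- beval_ceval in Hlb. fold y in Hlb.
  set (T := x ^ gamma * y ^ d).
  assert (HT : 0 <= T) by (unfold T; apply Rmult_le_pos; apply pow_le; lra).
  assert (HE : 0 <= T / R0) by (unfold Rdiv; apply Rmult_le_pos; [lra|left; apply Rinv_0_lt_compat; lra]).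
  assert (Hhl : 1 * hl (map Cmod (map (fun c => ceval c z) q)) y <=
                INR (length (map Cmod (map (fun c => ceval c z) q))) * (Sall * (T / R0))).
  { change 1 with (y ^ 0). apply hl_bound_gen. lra. nra.
    intros m Hm. rewrite !length_map in Hm. rewrite map_map.
    rewrite (nth_map_def (fun c : cpoly => Cmod (ceval c z)) q []) by lia. rewrite Nat.add_0_r.
    set (qm := nth m q []).
    assert (Hqm : sumR (map Cmod qm) <= Sall).
    { apply In_le_sumR. intros a Ha. apply in_map_iff in Ha. destruct Ha as [c [<- _]].
      apply sumR_ge0, in_map_cmod.
      apply (in_map (fun c => sumR (map Cmod c))). apply nth_In. lia. }
    assert (Hsq : 0 <= sumR (map Cmod qm)) by (apply sumR_ge0, in_map_cmod).
    assert (Hym : 0 <= y ^ m) by (apply pow_le; lra).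
    assert (H1 := ceval_ub qm z). fold x in H1.
    assert (H2 : x ^ 0 * hn (map Cmod qm) x * y ^ m <= sumR (map Cmod qm) * (T / R0)).
    { apply hn_bound_gen. lra. auto. intros i Hi. rewrite length_map in Hi.
      rewrite (nth_map_def Cmod qm Defs.C0) by auto. rewrite Nat.add_0_r.
      set (c := nth i qm Defs.C0).
      destruct (Req_EM_T (Cmod c) 0) as [Hc|Hc].
      - rewrite Hc. lra.
      - assert (Hin := alpha_mem q d gamma m i ltac:(lia) Hi (cnz_true c Hc)).
        destruct (fold_omax_ge _ _ Hin) as [a [Ha Hva]].
        fold (alpha q d gamma) in Ha.
        unfold in_WR in HW. rewrite Ha in HW. simpl in HW. destruct HW as [_ HW].
        fold x y in HW.
        assert (K := kreal x y R0 a i gamma m d ltac:(lra) ltac:(lra) HW ltac:(lia) Hva).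
        fold T in K.
        assert (Hxy : x ^ i * y ^ m <= T / R0).
        { apply Rmult_le_reg_l with R0. lra. field_simplify; lra. }
        pose proof (cmod_ge0 c).
        assert (Cmod c * (x ^ i * y ^ m) <= Cmod c * (T / R0)) by
          (apply Rmult_le_compat_l; lra). nra. }
    simpl pow in H2. rewrite Rmult_1_l in H2.
    assert (y ^ m * Cmod (ceval qm z) <= y ^ m * hn (map Cmod qm) x) by
      (apply Rmult_le_compat_l; lra).
    assert (sumR (map Cmod qm) * (T / R0) <= Sall * (T / R0)) by
      (apply Rmult_le_compat_r; lra).
    nra. }
  rewrite !length_map, Hq in Hhl.
  assert (Hfin : INR (S d) * (Sall * (T / R0)) <= T / 4).
  { assert (INR (S d) * Sall * 4 <= R0) by lra.
    replace (INR (S d) * (Sall * (T / R0))) with ((INR (S d) * Sall * 4) * T / (4 * R0))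
      by (field; lra).
    apply Rmult_le_reg_r with (4 * R0). lra. field_simplify; try lra. nra. }
  assert (Cmod (ceval (nth d q []) z) * y ^ d >= 3/4 * x^gamma * y ^ d).
  { assert (0 <= y ^ d) by (apply pow_le; lra). nra. }
  unfold T in *. lra.
Qed.

Module GR2.
Import Coquelicot.Coquelicot.
Lemma squeeze (u v : nat -> R) (ap g C dR : R) (N : nat) : 1 < dR -> Un_cv u g ->
  (forall n, (N <= n)%nat -> ap * u n <= v n <= ap * u n + C / dR ^ n) ->
  Un_cv v (ap * g).
Proof.
  intros Hd Hu H. apply is_lim_seq_Reals. apply is_lim_seq_Reals in Hu.
  apply (is_lim_seq_le_le_loc (fun n => ap * u n) v (fun n => ap * u n + C / dR ^ n)).
  - exists N. exact H.
  - replace (Finite (ap * g)) with (Rbar_mult ap g) by reflexivity.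
    apply is_lim_seq_scal_l. exact Hu.
  - replace (ap * g) with (ap * g + 0) by ring. apply is_lim_seq_plus'.
    apply (is_lim_seq_scal_l u ap g Hu). apply geo0; auto.
Qed.
Lemma cv_ext_loc (u v : nat -> R) (l : R) (N : nat) :
  (forall n, (N <= n)%nat -> u n = v n) -> Un_cv u l -> Un_cv v l.
Proof.
  intros H Hu. apply is_lim_seq_Reals. apply is_lim_seq_Reals in Hu.
  apply (is_lim_seq_ext_loc u v). exists N. exact H. exact Hu.
Qed.
End GR2.
Import GR2.

Lemma fiter_fst p q n z w : fst (fiter p q n (z, w)) = piter p n z.
Proof. induction n; simpl; auto. unfold fiter in *. simpl. rewrite IHn. reflexivity. Qed.

Lemma fiter_eq p q n z w : fiter p q n (z, w) = (piter p n z, Qiter p q n z w).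
Proof. unfold Qiter. rewrite <- (fiter_fst p q n z w). destruct (fiter p q n (z, w)); auto. Qed.

Lemma Qiter_S p q n z w : Qiter p q (S n) z w = beval q (piter p n z) (Qiter p q n z w).
Proof. unfold Qiter at 1. unfold fiter. simpl. fold (fiter p q n (z, w)).
  rewrite fiter_eq. reflexivity. Qed.

Lemma logp_mono (y z : R) : y <= z -> logp y <= logp z.
Proof.
  intro H. unfold logp. destruct (Rlt_dec 1 z); destruct (Rlt_dec 1 y).
  - apply ln_le'; lra.
  - left. rewrite <- ln_1. apply ln_increasing; lra.
  - lra.
  - lra.
Qed.
Lemma logp_ge_ln (y : R) : 0 < y -> ln y <= logp y.
Proof. intro H. unfold logp. destruct (Rlt_dec 1 y). lra.
  assert (ln y <= ln 1) by (apply ln_le'; lra). rewrite ln_1 in H0. lra. Qed.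
Lemma logp_eq_ln (y : R) : 1 <= y -> logp y = ln y.
Proof. intro H. unfold logp. destruct (Rlt_dec 1 y). auto.
  assert (y = 1) by lra. subst. rewrite ln_1. auto. Qed.
Lemma ln_Rpower' x a : ln (Rpower x a) = a * ln x.
Proof. unfold Rpower. apply ln_exp. Qed.

Lemma p_log (p : cpoly) (d : nat) : monic_deg p d -> (1 <= d)%nat ->
  exists Kp Mp, 1 <= Kp /\ 0 <= Mp /\ forall u, Kp <= Cmod u ->
    0 < Cmod (ceval p u) /\ Rabs (ln (Cmod (ceval p u)) - INR d * ln (Cmod u)) <= Mp.
Proof.
  intros Hp Hd. destruct (monic_bounds p d Hp Hd) as [K [HK [HS Hb]]].
  set (S := sumR (map Cmod p)) in *.
  assert (Hl2 : 0 < ln 2) by (rewrite <- ln_1; apply ln_increasing; lra).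
  assert (HlS : 0 <= ln S) by (rewrite <- ln_1; apply ln_le'; lra).
  exists K, (ln S + ln 2). split; auto. split; [lra|]. intros u Hu.
  specialize (Hb u Hu). set (x := Cmod u) in *.
  assert (Hxd : 0 < x ^ d) by (apply pow_lt; lra).
  assert (Hpos : 0 < Cmod (ceval p u)) by lra. split; auto.
  rewrite <- ln_pow by lra.
  assert (H1 : ln (Cmod (ceval p u)) <= ln S + ln (x ^ d)).
  { rewrite <- ln_mult by lra. apply ln_le'; lra. }
  assert (H2 : ln (x ^ d) - ln 2 <= ln (Cmod (ceval p u))).
  { replace (ln (x ^ d) - ln 2) with (ln (x ^ d * / 2)).
    apply ln_le'. nra. nra. rewrite ln_mult, ln_Rinv; lra. }
  apply Rabs_le. lra.
Qed.

Theorem corollary6p9 (d gamma : nat) (p : cpoly) (q : bpoly) :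
  (2 <= d)%nat ->
  (1 <= gamma)%nat ->
  monic_deg p d ->                                 (* delta = d, p monic *)
  length q = S d ->                                (* deg_w q = d *)
  monic_deg (nth d q nil) gamma ->                 (* leading coeff b monic of degree gamma *)
  exists Rmin : R, forall R0 : R,
    Rmin <= R0 -> 1 < R0 ->
    (forall x, in_WR q d gamma R0 x -> in_WR q d gamma R0 (fmap p q x)) ->
    (forall x, in_WR q d gamma R0 x -> in_Ap p (fst x)) ->
    forall z w : Cx, in_Ap p z ->
      (in_Af p q d gamma R0 (z, w) -> cv_infty (Gf_seq p q d gamma z w)) /\
      (~ in_Af p q d gamma R0 (z, w) ->
         exists g : R, Un_cv (Gp_seq p d z) g /\
           Un_cv (Gf_seq p q d gamma z w) (alpha_plus q d gamma * g)).
Proof.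
  intros Hd Hg Hp Hq Hb.
  destruct (q_lb d gamma q Hg Hq Hb) as [Rmin [HRmin Hqlb]].
  destruct (p_log p d Hp ltac:(lia)) as [Kp [Mp [HKp [HMp Hplog]]]].
  exists Rmin. intros R0 HR0 HR1 Hinv _ z w Hz.
  set (dR := INR d).
  assert (HdR : 1 < dR) by (unfold dR; replace 1 with (INR 1) by reflexivity; apply lt_INR; lia).
  set (c := Mp / (dR - 1)).
  assert (Hc : 0 <= c) by (unfold c, Rdiv; apply Rmult_le_pos; [lra|left; apply Rinv_0_lt_compat; lra]).
  assert (Hl2 : 0 < ln 2) by (rewrite <- ln_1; apply ln_increasing; lra).
  set (xs := fun n => Cmod (piter p n z)).
  set (a := fun n => ln (xs n)).
  set (Th := Rmax (Rmax Kp R0) (exp (c + 2 * ln 2 + 1))).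
  destruct (Hz Th) as [N HN].
  assert (HxK : forall n, (N <= n)%nat -> Kp <= xs n /\ R0 < xs n /\ c + 2 * ln 2 + 1 <= a n).
  { intros n Hn. specialize (HN n Hn). fold (xs n) in HN.
    assert (Rmax Kp R0 <= Th) by apply Rmax_l.
    assert (Kp <= Rmax Kp R0) by apply Rmax_l.
    assert (R0 <= Rmax Kp R0) by apply Rmax_r.
    assert (exp (c + 2 * ln 2 + 1) <= Th) by apply Rmax_r.
    split; [lra|]. split; [lra|].
    unfold a. rewrite <- (ln_exp (c + 2 * ln 2 + 1)). apply ln_le'. apply exp_pos. lra. }
  destruct (green a dR Mp N HdR HMp) as [[g Hgcv] Hlow].
  { intros n Hn. destruct (HxK n Hn) as [HK _].
    destruct (Hplog (piter p n z) HK) as [_ H]. exact H. }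
  fold c in Hlow.
  assert (HGp : forall n, (N <= n)%nat -> Gp_seq p d z n = a n / dR ^ n).
  { intros n Hn. unfold Gp_seq. destruct (HxK n Hn) as [_ [H _]].
    rewrite logp_eq_ln by (unfold xs in H; lra). reflexivity. }
  assert (HGpcv : Un_cv (Gp_seq p d z) g).
  { apply (cv_ext_loc (fun n => a n / dR ^ n) _ g N); auto.
    intros n Hn. symmetry. apply HGp; auto. }
  split.
  -
    intros [n1 Hn1].
    assert (HW : forall k, in_WR q d gamma R0 (piter p (k + n1) z, Qiter p q (k + n1) z w)).
    { induction k. rewrite <- fiter_eq. exact Hn1.
      rewrite <- fiter_eq. change (S k + n1)%nat with (S (k + n1)).
      unfold fiter. simpl. fold (fiter p q (k + n1) (z, w)). apply Hinv.
      rewrite fiter_eq. exact IHk. }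
    set (n2 := (n1 + N)%nat).
    set (ys := fun n => Cmod (Qiter p q n z w)).
    set (lam := fun n => ln (ys n) / dR ^ n).
    assert (HWn : forall n, (n1 <= n)%nat -> in_WR q d gamma R0 (piter p n z, Qiter p q n z w)).
    { intros n Hn. replace n with ((n - n1) + n1)%nat by lia. apply HW. }
    set (e := 1 / dR ^ N / (2 * dR)).
    assert (He : 0 < e).
    { unfold e. assert (0 < dR ^ N) by (apply pow_lt; lra).
      unfold Rdiv. apply Rmult_lt_0_compat. apply Rmult_lt_0_compat. lra.
      apply Rinv_0_lt_compat; lra. apply Rinv_0_lt_compat; lra. }
    assert (Hstep : forall n, (n2 <= n)%nat -> lam n + e <= lam (S n)).
    { intros n Hn.
      destruct (Hqlb R0 (piter p n z) (Qiter p q n z w) HR0 (HWn n ltac:(unfold n2 in Hn; lia)))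
        as [Hy [Hx1 [_ Hbd]]].
      rewrite <- Qiter_S in Hbd. fold (xs n) in Hx1, Hbd. fold (ys n) in Hy, Hbd.
      fold (ys (S n)) in Hbd.
      destruct (HxK n ltac:(unfold n2 in Hn; lia)) as [_ [_ Han]].
      assert (Hlow' := Hlow n ltac:(unfold n2 in Hn; lia)).
      assert (HdN : 0 < dR ^ N) by (apply pow_lt; lra).
      assert (Hdn : 0 < dR ^ n) by (apply pow_lt; lra).
      assert (Hxg : 0 < xs n ^ gamma) by (apply pow_lt; lra).
      assert (Hyd : 0 < ys n ^ d) by (apply pow_lt; lra).
      assert (Hln : ln (1/2) + INR gamma * a n + dR * ln (ys n) <= ln (ys (S n))).
      { unfold a, dR. rewrite <- !ln_pow by lra. rewrite <- !ln_mult.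
        apply ln_le'. nra. lra. lra. lra. lra. nra. }
      assert (Hhalf : ln (1/2) = - ln 2).
      { unfold Rdiv. rewrite Rmult_1_l. apply ln_Rinv. lra. }
      assert (HgR : 1 <= INR gamma) by (replace 1 with (INR 1) by reflexivity; apply le_INR; lia).
      assert (Hapos : 0 <= a n) by lra.
      assert (Hga : a n / 2 <= INR gamma * a n - ln 2) by nra.
      assert (Hq1 : (a N - c) / dR ^ N >= 1 / dR ^ N).
      { destruct (HxK N ltac:(lia)) as [_ [_ HaN]]. unfold Rdiv.
        apply Rle_ge, Rmult_le_compat_r. left; apply Rinv_0_lt_compat; lra. lra. }
      unfold lam, e. simpl pow.
      assert (a n / dR ^ n >= 1 / dR ^ N) by lra.
      apply Rmult_le_reg_r with (dR * dR ^ n). nra.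
      field_simplify; try lra.
      assert (Hk : a n / dR ^ n * dR ^ n = a n) by (field; lra).
      assert (1 / dR ^ N * dR ^ n <= a n).
      { rewrite <- Hk. apply Rmult_le_compat_r; lra. }
      replace (1 / dR ^ N * dR ^ n) with (dR ^ n / dR ^ N) in H0 by (field; lra).
      match goal with |- ?L <= _ => replace L with (dR * ln (ys n) + (dR ^ n / dR ^ N) / 2)
        by (field; lra) end.
      lra. }
    assert (Hlin : forall k, lam n2 + INR k * e <= lam (k + n2)%nat).
    { induction k. simpl. lra. rewrite S_INR.
      change (S k + n2)%nat with (S (k + n2)).
      assert (H := Hstep (k + n2)%nat ltac:(lia)). lra. }
    assert (HGf : forall n, (n1 <= n)%nat -> lam n <= Gf_seq p q d gamma z w n).
    { intros n Hn. unfold Gf_seq, lam.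
      destruct (Hqlb R0 (piter p n z) (Qiter p q n z w) HR0 (HWn n Hn)) as [Hy _].
      fold (ys n) in Hy |- *. fold dR.
      unfold Rdiv. apply Rmult_le_compat_r. left; apply Rinv_0_lt_compat, pow_lt; lra.
      eapply Rle_trans. apply logp_ge_ln; auto. apply logp_mono. apply Rmax_r. }
    intro M.
    destruct (INR_unbounded ((M - lam n2) / e)) as [k0 Hk0].
    exists (k0 + n2)%nat. intros n Hn.
    replace n with ((n - n2) + n2)%nat by lia.
    eapply Rlt_le_trans. 2: apply HGf; unfold n2; lia.
    eapply Rlt_le_trans. 2: apply Hlin.
    assert (INR k0 <= INR (n - n2)) by (apply le_INR; lia).
    assert (M - lam n2 < INR k0 * e).
    { apply Rmult_lt_reg_r with (/ e). apply Rinv_0_lt_compat; lra.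
      rewrite Rmult_assoc, Rinv_r by lra. unfold Rdiv in Hk0. lra. }
    nra.
  -
    intros Hnaf. exists g. split; auto.
    assert (HnW : forall n, ~ in_WR q d gamma R0 (piter p n z, Qiter p q n z w)).
    { intros n H. apply Hnaf. exists n. rewrite fiter_eq. exact H. }
    apply (squeeze (Gp_seq p d z) _ (alpha_plus q d gamma) g (ln R0) dR N HdR HGpcv).
    intros n Hn. rewrite HGp by auto.
    destruct (HxK n Hn) as [_ [Hx _]]. fold (xs n) in Hx.
    assert (Hdn : 0 < dR ^ n) by (apply pow_lt; lra).
    assert (HlR : 0 <= ln R0) by (rewrite <- ln_1; apply ln_le'; lra).
    specialize (HnW n). unfold in_WR in HnW. simpl in HnW.
    unfold Gf_seq, alpha_plus. fold dR. fold (xs n).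
    destruct (alpha q d gamma) as [al|] eqn:Hal.
    + set (ap := Rmax al 0).
      assert (Hap0 : 0 <= ap) by apply Rmax_r.
      assert (Hapa : al <= ap) by apply Rmax_l.
      assert (Hys : Cmod (Qiter p q n z w) <= R0 * Rpower (xs n) al).
      { apply Rnot_lt_le. intro H. apply HnW. split; auto. }
      assert (Hrp : rpow (xs n) ap = Rpower (xs n) ap).
      { unfold rpow. destruct (Rlt_dec 0 (xs n)); auto. lra. }
      rewrite Hrp.
      assert (H1 : 1 <= Rpower (xs n) ap).
      { rewrite <- (Rpower_O (xs n)) by lra. apply Rle_Rpower; lra. }
      assert (H2 : Rpower (xs n) al <= Rpower (xs n) ap) by (apply Rle_Rpower; lra).
      set (m := Rmax (Rpower (xs n) ap) (Cmod (Qiter p q n z w))).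
      assert (Hm1 : Rpower (xs n) ap <= m) by apply Rmax_l.
      assert (Hm2 : m <= R0 * Rpower (xs n) ap).
      { apply Rmax_lub. nra. nra. }
      rewrite logp_eq_ln by lra.
      assert (L1 : ap * a n <= ln m).
      { unfold a. rewrite <- ln_Rpower'. apply ln_le'. apply Rpower_pos. auto. }
      assert (L2 : ln m <= ln R0 + ap * a n).
      { unfold a. rewrite <- ln_Rpower', <- ln_mult. apply ln_le'. lra. auto.
        lra. apply Rpower_pos. }
      split.
      * unfold Rdiv. rewrite <- Rmult_assoc. apply Rmult_le_compat_r.
        left; apply Rinv_0_lt_compat; lra. lra.
      * replace (ap * (a n / dR ^ n) + ln R0 / dR ^ n) with ((ap * a n + ln R0) / dR ^ n)
          by (field; lra).
        unfold Rdiv. apply Rmult_le_compat_r. left; apply Rinv_0_lt_compat; lra. lra.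
    + assert (HQ : Qiter p q n z w = Defs.C0).
      { destruct (Classical_Prop.classic (Qiter p q n z w = Defs.C0)); auto.
        exfalso. apply HnW. split; auto. }
      rewrite HQ, cmod_C0.
      assert (Hrp : rpow (xs n) 0 = 1).
      { unfold rpow. destruct (Rlt_dec 0 (xs n)). apply Rpower_O; auto. lra. }
      rewrite Hrp. rewrite Rmax_left by lra. unfold logp.
      destruct (Rlt_dec 1 1). lra.
      split.
      * unfold Rdiv. lra.
      * assert (0 <= ln R0 / dR ^ n) by (unfold Rdiv; apply Rmult_le_pos; [lra|left; apply Rinv_0_lt_compat; lra]).
        unfold Rdiv in *. lra.
Qed.
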